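(* For all $k\in\mathbb N$, all $n>k$ and all irrational $x\in(0,1)$, $$|\delta_k(T^{n-k}x)-\delta_n(x)|<-\log(1-2^{-k/2}).$$
   Context: $T:(0,1)\to[0,1)$ is the Gauss map $T(x)=\{1/x\}$ (fractional part of $1/x$). For irrational $x\in(0,1)$ with continued fraction expansion $[a_1,a_2,\ldots]$, $q_n(x)$ is the denominator (in lowest terms) of the $n$-th convergent $p_n/q_n=[a_1,\ldots,a_n]$, and $\delta_n(x)=\log q_n(x)+\sum_{j=0}^{n-1}\log(T^jx)$, with $\log$ the natural logarithm. *)

(* Defs.v *)
From Stdlib Require Import Reals.
Open Scope R_scope.

(* floor: Int_part y = up y - 1 is the integer part (floor) of y. *)
Definition frac (y : R) : R := y - IZR (Int_part y).

Definition gauss (x : R) : R := frac (/ x).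

Fixpoint iterT (j : nat) (x : R) : R :=
  match j with
  | O => x
  | S j' => gauss (iterT j' x)
  end.

(* cf_digit x j = a_{j+1}(x) = floor (1 / T^j x) *)
Definition cf_digit (x : R) (j : nat) : R := IZR (Int_part (/ iterT j x)).

(* qpair n x = (q_n(x), q_{n-1}(x)), via q_{-1}=0, q_0=1,
   q_n = a_n q_{n-1} + q_{n-2}. *)
Fixpoint qpair (n : nat) (x : R) : R * R :=
  match n with
  | O => (1, 0)
  | S m => let (q, q') := qpair m x in (cf_digit x m * q + q', q)
  end.

Definition cf_q (n : nat) (x : R) : R := fst (qpair n x).

Fixpoint logsum (n : nat) (x : R) : R :=
  match n with
  | O => 0
  | S m => logsum m x + ln (iterT m x)
  end.

Definition delta (n : nat) (x : R) : R := ln (cf_q n x) + logsum n x.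

Definition irrational (x : R) : Prop :=
  forall p q : Z, q <> 0%Z -> x <> IZR p / IZR q.

(* Main.v *)
Require Import Defs.
From Stdlib Require Import Reals Lra Lia Psatz ZArith.
Open Scope R_scope.

Lemma ln_le_sub1 z : 0 < z -> ln z <= z - 1.
Proof. intros Hz. pose proof (exp_ineq1_le (ln z)). rewrite exp_ln in H; lra. Qed.

Lemma gauss_good x : 0 < x < 1 -> irrational x -> 0 < gauss x < 1 /\ irrational (gauss x)
  /\ / x = IZR (Int_part (/ x)) + gauss x /\ 1 <= IZR (Int_part (/ x)).
Proof.
  intros [H0 H1] Hirr. unfold gauss, frac.
  destruct (base_Int_part (/ x)) as [B1 B2].
  set (z := Int_part (/ x)) in *.
  assert (Hx1 : 1 < / x).
  { rewrite <- Rinv_1. apply Rinv_lt_contravar; lra. }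
  assert (Hz : (1 <= z)%Z).
  { assert (0 < z)%Z by (apply lt_0_IZR; lra). lia. }
  apply IZR_le in Hz.
  assert (Hne : / x - IZR z <> 0).
  { intro E. apply (Hirr 1%Z z). intro Ez; rewrite Ez in Hz; simpl in Hz; lra.
    assert (x = / (/ x)) by (field; lra). rewrite H. replace (/ x) with (IZR z) by lra.
    field. lra. }
  split; [|split; [|split]].
  - lra.
  - intros p q Hq E. apply (Hirr q (z * q + p)%Z).
    + intro E2. apply (f_equal IZR) in E2. rewrite plus_IZR, mult_IZR in E2.
      assert (IZR q <> 0) by (apply not_0_IZR; auto).
      assert (/ x = (IZR z * IZR q + IZR p) / IZR q).
      { assert (IZR p = (/ x - IZR z) * IZR q) by (rewrite E; field; auto). rewrite H2. field. split; [lra|auto]. }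
      rewrite E2 in H2. assert (/ x = 0) by (rewrite H2; field; auto).
      assert (0 < / x) by (apply Rinv_0_lt_compat; lra). lra.
    + rewrite plus_IZR, mult_IZR.
      assert (IZR q <> 0) by (apply not_0_IZR; auto).
      assert (Hp: IZR p = (/ x - IZR z) * IZR q) by (rewrite E; field; auto).
      rewrite Hp. replace (IZR z * IZR q + (/ x - IZR z) * IZR q) with (/ x * IZR q) by ring.
      field. split; [lra|auto].
  - ring.
  - auto.
Qed.

Lemma iter_good x : 0 < x < 1 -> irrational x -> forall j,
  0 < iterT j x < 1 /\ irrational (iterT j x).
Proof.
  intros H Hi j. induction j as [|j IH]; simpl; auto.
  destruct IH as [I1 I2]. destruct (gauss_good _ I1 I2) as [? [? ?]]; auto.
Qed.

Lemma iterT_add j m x : iterT j (iterT m x) = iterT (j + m) x.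
Proof. induction j; simpl; auto. rewrite IHj; auto. Qed.

Fixpoint g (d : nat -> R) (u v : R) (n : nat) : R * R :=
  match n with
  | O => (u, v)
  | S m => (d m * fst (g d u v m) + snd (g d u v m), fst (g d u v m))
  end.

Lemma g_ext d d' u v n : (forall j, d j = d' j) -> g d u v n = g d' u v n.
Proof. intros H; induction n; simpl; auto. rewrite IHn, H; auto. Qed.

Lemma g_shift d u v m k :
  g d u v (m + k) = g (fun j => d (m + j)%nat) (fst (g d u v m)) (snd (g d u v m)) k.
Proof.
  induction k; simpl. rewrite Nat.add_0_r. destruct (g d u v m); auto.
  rewrite Nat.add_succ_r. simpl. rewrite IHk. auto.
Qed.

Lemma g_lin d u v k :
  fst (g d u v k) = u * fst (g d 1 0 k) + v * fst (g d 0 1 k) /\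
  snd (g d u v k) = u * snd (g d 1 0 k) + v * snd (g d 0 1 k).
Proof.
  induction k; simpl. split; ring.
  destruct IHk as [H1 H2]. rewrite H1, H2. split; ring.
Qed.

Lemma g_det d k :
  (fst (g d 1 0 k) * snd (g d 0 1 k) - snd (g d 1 0 k) * fst (g d 0 1 k))^2 = 1.
Proof.
  induction k; simpl. ring.
  simpl. revert IHk. generalize (fst (g d 1 0 k)) (snd (g d 1 0 k)) (fst (g d 0 1 k)) (snd (g d 0 1 k)). intros a b c e H. transitivity ((a*e-b*c)^2); [ring | exact H].
Qed.

Section Grow.
Variable d : nat -> R.
Hypothesis Hd : forall j, 1 <= d j.

Lemma g_nonneg u v n : 0 <= u -> 0 <= v -> 0 <= fst (g d u v n) /\ 0 <= snd (g d u v n).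
Proof.
  intros Hu Hv. induction n; simpl; auto. destruct IHn. specialize (Hd n). split; nra.
Qed.

Lemma g_step u v n : 0 <= u -> 0 <= v ->
  fst (g d u v n) + snd (g d u v n) <= fst (g d u v (S n)).
Proof.
  intros Hu Hv. destruct (g_nonneg u v n Hu Hv). simpl. specialize (Hd n). nra.
Qed.

Lemma g01_ge1 n : 1 <= fst (g d 0 1 (S n)).
Proof.
  induction n.
  - pose proof (g_step 0 1 0). simpl in *. lra.
  - pose proof (g_step 0 1 (S n)). pose proof (g_nonneg 0 1 (S n)). lra.
Qed.

Lemma g10_snd_le n : snd (g d 1 0 n) <= fst (g d 1 0 n).
Proof.
  destruct n. simpl; lra.
  pose proof (g_step 1 0 n). pose proof (g_nonneg 1 0 n). simpl in *. lra.
Qed.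

Lemma g10_ge1 n : 1 <= fst (g d 1 0 n).
Proof.
  induction n. simpl; lra.
  pose proof (g_step 1 0 n). pose proof (g_nonneg 1 0 n). lra.
Qed.

Lemma g10_growth n : 2 ^ n <= 2 * (fst (g d 1 0 n))^2.
Proof.
  assert (forall n, 2 ^ n <= 2 * (fst (g d 1 0 n))^2 /\ 2 ^ (S n) <= 2 * (fst (g d 1 0 (S n)))^2).
  { intro m; induction m as [|m [IH1 IH2]].
    - pose proof (g10_ge1 1). simpl in *. nra.
    - split; auto.
      pose proof (g_step 1 0 (S m)). pose proof (g_step 1 0 m). pose proof (g_nonneg 1 0 m).
      pose proof (g10_ge1 m).
      assert (snd (g d 1 0 (S m)) = fst (g d 1 0 m)) by reflexivity.
      change (2 ^ S (S m)) with (2 * (2 * 2 ^ m)). nra. }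
  apply H.
Qed.
End Grow.


Lemma frac_le a b c d : 0 < b -> 0 < d -> a * d <= c * b -> a / b <= c / d.
Proof.
  intros Hb Hd H.
  assert (a / b - c / d = (a * d - c * b) * / (b * d)) by (field; lra).
  assert (0 < / (b * d)) by (apply Rinv_0_lt_compat; nra).
  nra.
Qed.

Lemma key_bound (A B C D u v z : R) : 1 <= A -> 0 <= B -> 1 <= C -> 0 <= D -> 1 <= u ->
  0 <= v <= u -> 0 < z < 1 -> (A * D - B * C)^2 = 1 ->
  Rabs ((ln A - ln (A + B * z)) -
        (ln (u * A + v * C) - ln ((u * A + v * C) + (u * B + v * D) * z)))
  <= 1 / (A * (A + C)).
Proof.
  intros HA HB HC HD Hu Hv Hz Hdet.
  set (P := u * A + v * C). set (Q := u * B + v * D).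
  assert (HP : A <= P) by (unfold P; nra).
  assert (HQ : 0 <= Q) by (unfold Q; nra).
  assert (Hdel : (Q * A - P * B)^2 = v^2).
  { replace (Q * A - P * B) with (v * (A * D - B * C)) by (unfold P, Q; ring).
    rewrite Rpow_mult_distr, Hdet. ring. }
  assert (Hd1 : - v <= Q * A - P * B <= v) by nra.
  assert (HvAC : v * (A * (A + C)) <= A * P) by (unfold P; nra).
  pose (N1 := A * (P + Q * z)). pose (N2 := (A + B * z) * P).
  assert (HN1 : 0 < N1) by (assert (0 <= Q * z) by nra; unfold N1; nra).
  assert (HN2 : 0 < N2) by (assert (0 <= B * z) by nra; unfold N2; nra).
  replace ((ln A - ln (A + B * z)) - (ln P - ln (P + Q * z))) with (ln (N1 / N2)).
  2:{ assert (0 <= Q * z) by nra. assert (0 <= B * z) by nra.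
      unfold N1, N2, Rdiv. rewrite ln_mult by (try apply Rinv_0_lt_compat; nra).
      rewrite ln_Rinv by nra. rewrite !ln_mult by nra. ring. }
  assert (HW : 0 < N1 / N2) by (apply Rdiv_lt_0_compat; lra).
  assert (HAC : 0 < A * (A + C)) by nra.
  destruct (Rle_or_lt 0 (ln (N1 / N2))) as [Hl | Hl].
  - rewrite Rabs_right by lra.
    apply Rle_trans with (N1 / N2 - 1). apply ln_le_sub1; auto.
    replace (N1 / N2 - 1) with ((N1 - N2) / N2) by (field; lra).
    replace (N1 - N2) with (z * (Q * A - P * B)) by (unfold N1, N2; ring).
    apply frac_le; auto.
    assert (z * (Q * A - P * B) <= v) by nra.
    assert (z*(Q*A-P*B)*(A*(A+C)) <= v*(A*(A+C))) by (apply Rmult_le_compat_r; lra).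
    assert (A*P <= (A+B*z)*P) by (apply Rmult_le_compat_r; [lra| assert (0 <= B*z) by nra; lra]).
    unfold N2. lra.
  - rewrite Rabs_left by lra.
    rewrite <- ln_Rinv by auto.
    apply Rle_trans with (/ (N1 / N2) - 1). apply ln_le_sub1. apply Rinv_0_lt_compat; auto.
    replace (/ (N1 / N2) - 1) with ((N2 - N1) / N1) by (field; lra).
    replace (N2 - N1) with (- z * (Q * A - P * B)) by (unfold N1, N2; ring).
    apply frac_le; auto.
    assert (- z * (Q * A - P * B) <= v) by nra.
    assert (-z*(Q*A-P*B)*(A*(A+C)) <= v*(A*(A+C))) by (apply Rmult_le_compat_r; lra).
    assert (A*P <= A*(P+Q*z)) by (apply Rmult_le_compat_l; [lra| assert (0 <= Q*z) by nra; lra]).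
    unfold N1. lra.
Qed.

Lemma final_bound k A C : (1 <= k)%nat -> 1 <= A -> 1 <= C -> 2 ^ k <= 2 * A ^ 2 ->
  1 / (A * (A + C)) < - ln (1 - Rpower 2 (- INR k / 2)).
Proof.
  intros Hk HA HC Hg.
  set (t := Rpower 2 (- INR k / 2)).
  assert (Ht0 : 0 < t) by (unfold t, Rpower; apply exp_pos).
  assert (Htt : t * t = / 2 ^ k).
  { unfold t. rewrite <- Rpower_plus.
    replace (- INR k / 2 + - INR k / 2) with (- INR k) by field.
    rewrite Rpower_Ropp, Rpower_pow by lra. reflexivity. }
  assert (H2k : 2 <= 2 ^ k).
  { destruct k as [|k']; [lia|]. simpl. pose proof (pow_R1_Rle 2 k'). lra. }
  assert (Hinv : / 2 ^ k < 1).
  { rewrite <- Rinv_1. apply Rinv_lt_contravar; lra. }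
  assert (Ht1 : t < 1) by nra.
  set (X := A * (A + C)).
  assert (HX : 2 * A <= X) by (unfold X; nra).
  assert (HX2 : 2 ^ k < X * X) by nra.
  assert (He : 1 / X * (1 / X) < t * t).
  { rewrite Htt. replace (1 / X * (1 / X)) with (/ (X * X)) by (field; nra).
    apply Rinv_lt_contravar; nra. }
  assert (He0 : 0 < 1 / X) by (apply Rdiv_lt_0_compat; nra).
  assert (Het : 1 / X < t) by nra.
  pose proof (ln_le_sub1 (1 - t)). lra.
Qed.

Lemma qpair_g n x : qpair n x = g (cf_digit x) 1 0 n.
Proof.
  induction n; simpl; auto. rewrite IHn. destruct (g (cf_digit x) 1 0 n); auto.
Qed.

Lemma digit_ge1 x j : 0 < x < 1 -> irrational x -> 1 <= cf_digit x j.
Proof.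
  intros H Hi. destruct (iter_good x H Hi j) as [H1 H2].
  destruct (gauss_good _ H1 H2) as [_ [_ [_ H3]]]. exact H3.
Qed.

Lemma logsum_eq x : 0 < x < 1 -> irrational x -> forall n,
  logsum n x = - ln (fst (g (cf_digit x) 1 0 n) + snd (g (cf_digit x) 1 0 n) * iterT n x).
Proof.
  intros H Hi n. pose proof (digit_ge1 x) as Hd.
  assert (Hd' : forall j, 1 <= cf_digit x j) by (intro; apply Hd; auto).
  induction n as [|n IH].
  - simpl. replace (1 + 0 * x) with 1 by ring. rewrite ln_1. ring.
  - simpl logsum. rewrite IH.
    destruct (iter_good x H Hi n) as [H1 H2].
    destruct (gauss_good _ H1 H2) as [_ [_ [H3 _]]].
    assert (NN : 0 <= fst (g (cf_digit x) 1 0 n) /\ 0 <= snd (g (cf_digit x) 1 0 n)) by (apply g_nonneg; auto; lra).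
    pose proof (g10_ge1 _ Hd' n) as F1.
    change (iterT (S n) x) with (gauss (iterT n x)).
    simpl g. simpl fst; simpl snd.
    set (F := fst (g (cf_digit x) 1 0 n)) in *.
    set (Sv := snd (g (cf_digit x) 1 0 n)) in *.
    set (z := iterT n x) in *.
    unfold cf_digit at 1. fold z.
    replace (IZR (Int_part (/ z)) * F + Sv + F * gauss z) with ((F + Sv * z) * / z).
    2:{ set (a := IZR (Int_part (/ z))) in *. set (w := gauss z) in *.
      rewrite Rmult_plus_distr_r. replace (Sv * z * / z) with Sv by (field; lra).
      rewrite H3. ring. }
    rewrite ln_mult, ln_Rinv; try lra. nra. apply Rinv_0_lt_compat; lra.
Qed.

Lemma delta_eq x n : 0 < x < 1 -> irrational x ->
  delta n x = ln (fst (g (cf_digit x) 1 0 n))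
              - ln (fst (g (cf_digit x) 1 0 n) + snd (g (cf_digit x) 1 0 n) * iterT n x).
Proof.
  intros H Hi. unfold delta, cf_q. rewrite logsum_eq by auto. rewrite qpair_g. ring.
Qed.

Theorem lemma3p5 (k n : nat) (x : R) :
  (1 <= k)%nat -> (k < n)%nat -> 0 < x < 1 -> irrational x ->
  Rabs (delta k (iterT (n - k) x) - delta n x)
    < - ln (1 - Rpower 2 (- INR k / 2)).
Proof.
  intros Hk Hkn Hx Hirr.
  set (m := (n - k)%nat).
  assert (Hn : n = (m + k)%nat) by (unfold m; lia).
  set (y := iterT m x).
  destruct (iter_good x Hx Hirr m) as [Hy Hyi]. fold y in Hy, Hyi.
  set (d := cf_digit x).
  assert (Hd : forall j, 1 <= d j) by (intro; apply digit_ge1; auto).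
  set (d' := fun j => d (m + j)%nat).
  assert (Hd' : forall j, 1 <= d' j) by (intro; apply Hd).
  assert (Hyd : forall j, cf_digit y j = d' j).
  { intro j. unfold cf_digit, d', d, y. rewrite iterT_add. rewrite (Nat.add_comm j m). auto. }
  assert (Hz : iterT k y = iterT n x) by (unfold y; rewrite iterT_add, Hn, Nat.add_comm; auto).
  rewrite (delta_eq y k Hy Hyi), (delta_eq x n Hx Hirr), Hz.
  rewrite (g_ext _ _ 1 0 k Hyd).
  fold d. rewrite Hn, g_shift. fold d'.
  set (u := fst (g d 1 0 m)). set (v := snd (g d 1 0 m)).
  destruct (g_lin d' u v k) as [E1 E2]. rewrite E1, E2.
  rewrite <- Hn.
  destruct (iter_good x Hx Hirr n) as [Hzn _].
  destruct k as [|k']; [lia|].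
  eapply Rle_lt_trans.
  - apply key_bound.
    + apply g10_ge1; auto.
    + apply (g_nonneg _ Hd' 1 0); lra.
    + apply g01_ge1; auto.
    + apply (g_nonneg _ Hd' 0 1); lra.
    + apply g10_ge1; auto.
    + split. apply (g_nonneg _ Hd 1 0); lra. apply g10_snd_le; auto.
    + auto.
    + apply g_det.
  - apply final_bound; auto.
    + apply g10_ge1; auto.
    + apply g01_ge1; auto.
    + apply g10_growth; auto.
Qed.
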